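(* Let $A\subset\mathbb R$ be an open interval of length strictly larger than $2$, let $\psi:A\to\mathbb C$ be a regular $\mathbb C$-supershift on $A$, and let $a_0\in A$. Then the function $a\in A\mapsto\int_{a_0}^a\psi(\alpha)\,d\alpha$ is a regular $\mathbb C$-supershift on $A$.
   Context: For an open interval $A\subset\mathbb R$ of length $R>2$ (possibly infinite), set $\mathbb A=\{(a,a')\in\mathbb R\times A:\ a'+[-1,1]\subset A,\ a+a'\in A\}$. For a sequence $\boldsymbol\epsilon=(\epsilon_N)_{N\ge1}$ with $\epsilon_N\in[0,1)$ and $\epsilon_N\to0$, put $h^{\boldsymbol\epsilon}_{N,\nu}=1-2\,\frac{\nu+\epsilon_N(N-\nu)}{N}$ for $0\le\nu\le N$. For a continuous $\psi:A\to\mathbb C$ and $(a,a')\in\mathbb A$ set $$S_N^{\boldsymbol\epsilon}[\psi](a,a')=\sum_{\nu=0}^N\binom N\nu\Big(\frac{1+a}2\Big)^{N-\nu}\Big(\frac{1-a}2\Big)^{\nu}\psi\big(a'+h^{\boldsymbol\epsilon}_{N,\nu}\big).$$ A continuous $\psi:A\to\mathbb C$ is called a regular $\mathbb C$-supershift on $A$ if (1) for every such sequence $\boldsymbol\epsilon$, $S_N^{\boldsymbol\epsilon}[\psi](a,a')\to\psi(a+a')$ as $N\to\infty$ uniformly on compact subsets of $\mathbb A$; and (2) for every family $\{\boldsymbol\epsilon_{\iota'}=(\epsilon_{\iota',N})_{N\ge1}:\iota'\in I'\}$ of such sequences with $\sup_{\iota'\in I'}\epsilon_{\iota',N}\to0$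 as $N\to\infty$, the convergence in (1) is uniform with respect to $\iota'\in I'$ on each compact subset of $\mathbb A$. *)

(* Defs.v *)
From Stdlib Require Import Reals List.
From Coquelicot Require Import Coquelicot.
Open Scope R_scope.

Definition inI (lo hi : Rbar) (x : R) : Prop := Rbar_lt lo x /\ Rbar_lt x hi.

Definition long_interval (lo hi : Rbar) : Prop := Rbar_lt (Rbar_plus lo 2) hi.

Definition bbA (lo hi : Rbar) (p : R * R) : Prop :=
  (forall t, -1 <= t <= 1 -> inI lo hi (snd p + t)) /\ inI lo hi (fst p + snd p).

Definition compact2 (K : R * R -> Prop) : Prop :=
  forall (I : Type) (U : I -> (R * R) -> Prop),
    (forall i, @open (prod_UniformSpace R_UniformSpace R_UniformSpace) (U i)) ->
    (forall x, K x -> exists i, U i x) ->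
    exists l : list I, forall x, K x -> exists i, In i l /\ U i x.

Definition adm_seq (eps : nat -> R) : Prop :=
  (forall N : nat, (1 <= N)%nat -> 0 <= eps N < 1) /\ is_lim_seq eps 0.

Definition hN (eps : nat -> R) (N nu : nat) : R :=
  1 - 2 * ((INR nu + eps N * (INR N - INR nu)) / INR N).

Definition SN (eps : nat -> R) (psi : R -> C) (N : nat) (p : R * R) : C :=
  sum_n (fun nu : nat =>
     Cmult (RtoC (Binomial.C N nu * ((1 + fst p) / 2) ^ (N - nu) * ((1 - fst p) / 2) ^ nu))
       (psi (snd p + hN eps N nu))) N.

Definition regular_supershift (lo hi : Rbar) (psi : R -> C) : Prop :=
  (forall x, inI lo hi x -> continuous psi x) /\
  (* (1) *)
  (forall eps, adm_seq eps ->
     forall K, (forall p, K p -> bbA lo hi p) -> compact2 K ->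
     forall e, 0 < e -> exists N0 : nat, forall N, (N0 <= N)%nat ->
       forall p, K p -> Cmod (Cminus (SN eps psi N p) (psi (fst p + snd p))) < e) /\
  (* (2) *)
  (forall (I' : Type) (eps : I' -> nat -> R),
     (forall i, adm_seq (eps i)) ->
     (forall eta, 0 < eta -> exists M : nat, forall N, (M <= N)%nat ->
        forall i, eps i N <= eta) ->
     forall K, (forall p, K p -> bbA lo hi p) -> compact2 K ->
     forall e, 0 < e -> exists N0 : nat, forall N, (N0 <= N)%nat ->
       forall i p, K p -> Cmod (Cminus (SN (eps i) psi N p) (psi (fst p + snd p))) < e).

(* Main.v *)
Require Import Defs.
From Stdlib Require Import Reals.
From Coquelicot Require Import Coquelicot.
From Stdlib Require Import Lra Psatz Lia ZArith List Classical ClassicalEpsilon.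

Definition Pw (b : R) : R := (1 + b) / 2.
Definition Qw (b : R) : R := (1 - b) / 2.

Fixpoint B (N : nat) (g : nat -> C) (b : R) : C :=
  match N with
  | O => g O
  | S M => plus (scal (Pw b) (B M g b)) (scal (Qw b) (B M (fun k => g (S k)) b))
  end.

Ltac cpair :=
  repeat match goal with
  | z : C |- _ => let x := fresh "x" in let y := fresh "y" in destruct z as [x y]
  end;
  apply injective_projections; simpl;
  unfold scal, plus, minus, opp; simpl; unfold prod_scal, prod_plus, prod_opp; simpl;
  unfold scal, plus, minus, opp, mult, zero; simpl;
  try lazymatch goal with |- ?a = ?b => change (@eq R a b) end.



Lemma is_derive_scal_fun (f : R -> R) (h : R -> C) (x df : R) (dh : C) :
  is_derive f x df -> @is_derive R_AbsRing C_R_NormedModule h x dh ->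
  @is_derive R_AbsRing C_R_NormedModule (fun t => scal (f t) (h t)) x (plus (scal df (h x)) (scal (f x) dh)).
Proof.
  intros Hf Hh.
  unfold is_derive in *.
  eapply filterdiff_ext_lin.
  apply (filterdiff_scal_fct x f h _ _ (fun n m => Rmult_comm n m) Hf Hh).
  intros y. simpl. cpair; ring.
Qed.

Lemma B_lin N : forall g h b, B N (fun k => minus (g k) (h k)) b = minus (B N g b) (B N h b).
Proof.
  induction N; intros g h b; simpl. reflexivity.
  rewrite (IHN g h), (IHN (fun k => g (S k)) (fun k => h (S k))).
  generalize (B N g b) (B N h b) (B N (fun k => g (S k)) b) (B N (fun k => h (S k)) b).
  intros. cpair; ring.
Qed.

Lemma Pw_der b : is_derive Pw b (1/2).
Proof. unfold Pw. auto_derive; auto; lra. Qed.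
Lemma Qw_der b : is_derive Qw b (-1/2).
Proof. unfold Qw. auto_derive; auto; lra. Qed.

Lemma deriv_eq {V : NormedModule R_AbsRing} (f : R -> V) x d1 d2 :
  is_derive f x d1 -> d1 = d2 -> is_derive f x d2.
Proof. intros H ->; exact H. Qed.

Lemma B_deriv N : forall g b,
  @is_derive R_AbsRing C_R_NormedModule (fun x => B (S N) g x) b
    (scal (INR (S N) / 2) (B N (fun k => minus (g k) (g (S k))) b)).
Proof.
  induction N; intros g b.
  - simpl.
    eapply deriv_eq.
    + apply @is_derive_plus; apply @is_derive_scal_l; [apply Pw_der | apply Qw_der].
    + generalize (g 0%nat) (g 1%nat). intros. cpair; field.
  - change (fun x => B (S (S N)) g x) with
      (fun x => plus (scal (Pw x) (B (S N) g x)) (scal (Qw x) (B (S N) (fun k => g (S k)) x))).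
    eapply deriv_eq.
    + apply @is_derive_plus; apply is_derive_scal_fun; try apply Pw_der; try apply Qw_der; apply IHN.
    + transitivity (plus (scal (1/2) (minus (B (S N) g b) (B (S N) (fun k => g (S k)) b)))
         (scal (INR (S N)/2) (plus (scal (Pw b) (B N (fun k => minus (g k) (g (S k))) b))
            (scal (Qw b) (B N (fun k => minus (g (S k)) (g (S (S k)))) b))))).
      * generalize (B (S N) g b) (B (S N) (fun k => g (S k)) b) (B N (fun k => minus (g k) (g (S k))) b)
          (B N (fun k => minus (g (S k)) (g (S (S k)))) b) (INR (S N)).
        intros. cpair; field.
      * assert (E1 : B (S N) (fun k => minus (g k) (g (S k))) b = minus (B (S N) g b) (B (S N) (fun k => g (S k)) b)) by apply B_lin.
        assert (E2 : B (S N) (fun k => minus (g k) (g (S k))) b = plus (scal (Pw b) (B N (fun k => minus (g k) (g (S k))) b))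
            (scal (Qw b) (B N (fun k => minus (g (S k)) (g (S (S k)))) b))) by reflexivity.
        rewrite (S_INR (S N)).
        revert E1 E2.
        generalize (B (S N) g b) (B (S N) (fun k => g (S k)) b) (B N (fun k => minus (g k) (g (S k))) b)
          (B N (fun k => minus (g (S k)) (g (S (S k)))) b) (INR (S N))
          (B (S N) (fun k => minus (g k) (g (S k))) b).
        intros [x1 y1] [x2 y2] [x3 y3] [x4 y4] r [x5 y5] E1 E2.
        injection E1; injection E2. unfold scal, plus, minus, opp, mult, zero in *; simpl in *.
        unfold prod_scal, prod_plus, prod_opp in *; simpl in *.
        unfold scal, plus, minus, opp, mult, zero in *; simpl in *. intros.
        apply injective_projections; simpl; unfold scal, plus, minus, opp, mult, zero; simpl; nra.
Qed.

Lemma B_m1 N : forall g, B N g (-1) = g N.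
Proof.
  induction N; intros g; simpl. reflexivity.
  rewrite (IHN g), (IHN (fun k => g (S k))). unfold Pw, Qw.
  replace ((1 + -1)/2) with 0 by field. replace ((1 - -1)/2) with 1 by field.
  generalize (g N) (g (S N)). intros. cpair; ring.
Qed.

Lemma pascal_sum {G : AbelianGroup} (x a b : nat -> G) N :
  x O = a O -> (forall k, (k < N)%nat -> x (S k) = plus (a (S k)) (b k)) -> x (S N) = b N ->
  sum_n x (S N) = plus (sum_n a N) (sum_n b N).
Proof.
  intros H0 HS HN.
  assert (Hm : forall M, (M <= N)%nat -> plus (sum_n x M) (b M) = plus (sum_n a M) (sum_n b M)).
  { induction M; intros HM.
    - rewrite !sum_O, H0. reflexivity.
    - rewrite !sum_Sn, HS by lia.
      rewrite (plus_comm (a (S M)) (b M)), (plus_assoc (sum_n x M) (b M)), IHM by lia.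
      rewrite <- !plus_assoc. f_equal. rewrite !plus_assoc. f_equal. apply plus_comm. }
  rewrite sum_Sn, HN. apply Hm. lia.
Qed.

Lemma CRs (r : R) (z : C) : Cmult (RtoC r) z = scal r z.
Proof. destruct z as [x y]. unfold scal. simpl. unfold prod_scal. simpl. unfold Cmult, RtoC. simpl.
  unfold scal; simpl. unfold mult; simpl. f_equal; ring. Qed.

Definition tw (N nu : nat) (b : R) : R := Binomial.C N nu * Pw b ^ (N - nu) * Qw b ^ nu.

Lemma B_SN N : forall g b,
  sum_n (fun nu => Cmult (RtoC (Binomial.C N nu * ((1 + b) / 2) ^ (N - nu) * ((1 - b) / 2) ^ nu)) (g nu)) N
  = B N g b.
Proof.
  induction N; intros g b.
  - rewrite sum_O. simpl. rewrite C_n_0, CRs. generalize (g 0%nat). intros. cpair; ring.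
  - transitivity (@sum_n C_AbelianMonoid (fun nu => scal (tw (S N) nu b) (g nu)) (S N)).
    { apply sum_n_ext; intros; apply CRs. }
    transitivity (plus (@sum_n C_AbelianMonoid (fun nu => scal (Pw b) (scal (tw N nu b) (g nu))) N)
                       (@sum_n C_AbelianMonoid (fun nu => scal (Qw b) (scal (tw N nu b) (g (S nu)))) N)).
    { apply (@pascal_sum C_AbelianGroup).
    + assert (E : tw (S N) 0 b = Pw b * tw N 0 b).
      { unfold tw. simpl. rewrite !C_n_0. rewrite Nat.sub_0_r. ring. }
      generalize (g 0%nat). intros. cpair; rewrite E; ring.
    + intros k Hk.
      assert (E : tw (S N) (S k) b = Pw b * tw N (S k) b + Qw b * tw N k b).
      { unfold tw. rewrite <- pascal by exact Hk.
        replace (S N - S k)%nat with (S (N - S k)) by lia.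
        replace (N - k)%nat with (S (N - S k)) by lia. simpl. ring. }
      generalize (g (S k)). intros. cpair; rewrite E; ring.
    + assert (E : tw (S N) (S N) b = Qw b * tw N N b).
      { unfold tw. rewrite !C_n_n, !Nat.sub_diag. simpl. ring. }
      generalize (g (S N)). intros. cpair; rewrite E; ring. }
    assert (H1 : @sum_n C_AbelianMonoid (fun nu => scal (Pw b) (scal (tw N nu b) (g nu))) N = scal (Pw b) (B N g b)).
    { rewrite <- IHN. transitivity (scal (Pw b) (@sum_n C_AbelianMonoid (fun nu => scal (tw N nu b) (g nu)) N)).
      exact (@sum_n_scal_l R_Ring C_R_ModuleSpace (Pw b) (fun nu => scal (tw N nu b) (g nu)) N).
      apply f_equal. match goal with |- sum_n ?u _ = sum_n ?v _ => assert (Hp : forall n, u n = v n) by (intros; symmetry; apply CRs); exact (sum_n_ext u v N Hp) end. }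
    assert (H2 : @sum_n C_AbelianMonoid (fun nu => scal (Qw b) (scal (tw N nu b) (g (S nu)))) N = scal (Qw b) (B N (fun k => g (S k)) b)).
    { rewrite <- IHN. transitivity (scal (Qw b) (@sum_n C_AbelianMonoid (fun nu => scal (tw N nu b) (g (S nu))) N)).
      exact (@sum_n_scal_l R_Ring C_R_ModuleSpace (Qw b) (fun nu => scal (tw N nu b) (g (S nu))) N).
      apply f_equal. match goal with |- sum_n ?u _ = sum_n ?v _ => assert (Hp : forall n, u n = v n) by (intros; symmetry; apply CRs); exact (sum_n_ext u v N Hp) end. }
    rewrite H1, H2. reflexivity.
Qed.

Lemma B_cont N : forall g x, @continuous R_UniformSpace C_R_NormedModule (fun b => B N g b) x.
Proof.
  induction N; intros g x; simpl.
  - apply continuous_const.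
  - apply @continuous_plus; apply @continuous_scal; try apply IHN.
    + apply (ex_derive_continuous (V:=R_NormedModule)). eexists; apply Pw_der.
    + apply (ex_derive_continuous (V:=R_NormedModule)). eexists; apply Qw_der.
Qed.

Lemma B_RInt N : forall (G : nat -> R -> C) (I : nat -> C) u v b,
  (forall k, (k <= N)%nat -> @is_RInt C_R_NormedModule (G k) u v (I k)) ->
  @is_RInt C_R_NormedModule (fun s => B N (fun k => G k s) b) u v (B N I b).
Proof.
  induction N; intros G I u v b H; simpl.
  - apply H. lia.
  - apply @is_RInt_plus; apply @is_RInt_scal.
    + apply IHN. intros; apply H; lia.
    + apply (IHN (fun k => G (S k)) (fun k => I (S k))). intros; apply H; lia.
Qed.


Lemma inI_conv lo hi x y z : inI lo hi x -> inI lo hi y -> Rmin x y <= z <= Rmax x y -> inI lo hi z.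
Proof.
  intros [H1 H2] [H3 H4] [H5 H6]. split.
  - apply Rbar_lt_le_trans with (Rmin x y); [|exact H5].
    unfold Rmin; destruct Rle_dec; assumption.
  - apply Rbar_le_lt_trans with (Rmax x y); [exact H6|].
    unfold Rmax; destruct Rle_dec; assumption.
Qed.

Lemma inI_open lo hi : open (inI lo hi).
Proof. apply open_and; [apply open_Rbar_gt | apply open_Rbar_lt]. Qed.

Definition Psi (psi : R -> C) (a0 x : R) : C := @RInt C_R_CompleteNormedModule psi a0 x.

Lemma exRI lo hi (psi : R -> C) x y : (forall z, inI lo hi z -> @continuous R_UniformSpace C_R_NormedModule psi z) ->
  inI lo hi x -> inI lo hi y -> @ex_RInt C_R_CompleteNormedModule psi x y.
Proof.
  intros Hc Hx Hy. apply ex_RInt_continuous. intros z Hz. apply Hc. exact (inI_conv lo hi x y z Hx Hy Hz).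
Qed.

Lemma Psi_diff lo hi (psi : R -> C) a0 x y : (forall z, inI lo hi z -> @continuous R_UniformSpace C_R_NormedModule psi z) ->
  inI lo hi a0 -> inI lo hi x -> inI lo hi y ->
  minus (Psi psi a0 y) (Psi psi a0 x) = @RInt C_R_CompleteNormedModule psi x y.
Proof.
  intros Hc H0 Hx Hy. unfold Psi.
  rewrite <- (@RInt_Chasles C_R_CompleteNormedModule psi a0 x y) by (eapply exRI; eauto).
  generalize (@RInt C_R_CompleteNormedModule psi a0 x) (@RInt C_R_CompleteNormedModule psi x y). intros. cpair; ring.
Qed.

Lemma Psi_deriv lo hi (psi : R -> C) a0 x : (forall z, inI lo hi z -> @continuous R_UniformSpace C_R_NormedModule psi z) ->
  inI lo hi a0 -> inI lo hi x -> @is_derive R_AbsRing C_R_NormedModule (Psi psi a0) x (psi x).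
Proof.
  intros Hc H0 Hx. unfold Psi.
  apply (is_derive_RInt psi (fun b => @RInt C_R_CompleteNormedModule psi a0 b) a0 x).
  - apply (filter_imp (inI lo hi)).
    + intros y Hy. apply (@RInt_correct C_R_CompleteNormedModule). eapply exRI; eauto.
    + apply inI_open; auto.
  - apply Hc; auto.
Qed.

Notation nR := (@norm R_AbsRing C_R_NormedModule).

Lemma Cmod_normR : forall z : C, Cmod z = @norm R_AbsRing C_R_NormedModule z.
Proof. intros [x y]. unfold norm; simpl. unfold prod_norm, Cmod; simpl. unfold norm; simpl. unfold abs; simpl.
 f_equal. rewrite !Rmult_1_r, <- !Rabs_mult, !Rabs_right; try nra; ring. Qed.

Lemma INR_pos N : (1 <= N)%nat -> 0 < INR N.
Proof. intros; apply lt_0_INR; lia. Qed.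

Lemma hN_range ep N nu : (1 <= N)%nat -> 0 <= ep N <= 1 -> (nu <= N)%nat -> -1 <= hN ep N nu <= 1.
Proof.
  intros HN He Hnu. unfold hN.
  assert (Hn := INR_pos N HN). assert (Hv : 0 <= INR nu <= INR N) by (split; [apply pos_INR | apply le_INR; lia]).
  set (q := (INR nu + ep N * (INR N - INR nu)) / INR N).
  assert (Hq : q * INR N = INR nu + ep N * (INR N - INR nu)) by (unfold q; field; lra).
  assert (0 <= q <= 1) by nra. lra.
Qed.

Lemma hN_N ep N : (1 <= N)%nat -> hN ep N N = -1.
Proof. intros HN. assert (Hn := INR_pos N HN). unfold hN. replace (INR N - INR N) with 0 by ring. field. lra. Qed.

Lemma hN_step ep N mu : (1 <= N)%nat -> hN ep N mu = hN ep N (S mu) + 2 * (1 - ep N) / INR N.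
Proof. intros HN. assert (Hn := INR_pos N HN). unfold hN. rewrite S_INR. field. lra. Qed.

Lemma hN_shift ep del M mu : (1 <= M)%nat -> del M = ep (S M) + (1 - ep (S M)) / INR (S M) ->
  hN ep (S M) (S mu) = hN del M mu.
Proof.
  intros HM Hd. assert (Hn := INR_pos M HM). unfold hN. rewrite Hd, !S_INR. field. lra.
Qed.

Lemma core lo hi (psi : R -> C) a0 (M : nat) (ep del : nat -> R) (a a' e1 e2 Mp : R) :
  (forall z, inI lo hi z -> @continuous R_UniformSpace C_R_NormedModule psi z) -> inI lo hi a0 ->
  (1 <= M)%nat -> 0 <= ep (S M) < 1 ->
  del M = ep (S M) + (1 - ep (S M)) / INR (S M) ->
  0 <= e1 -> 0 <= e2 ->
  (forall t, -1 <= t <= 1 -> inI lo hi (a' + t)) ->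
  (forall b s, Rmin (-1) a <= b <= Rmax (-1) a -> 0 <= s <= 2 * (1 - ep (S M)) / INR (S M) ->
     inI lo hi (b + a' + s)) ->
  (forall b s, Rmin (-1) a <= b <= Rmax (-1) a -> 0 <= s <= 2 * (1 - ep (S M)) / INR (S M) ->
     Cmod (Cminus (SN del psi M (b, a' + s)) (psi (b + (a' + s)))) <= e1) ->
  (forall b s, Rmin (-1) a <= b <= Rmax (-1) a -> 0 <= s <= 2 * (1 - ep (S M)) / INR (S M) ->
     Cmod (Cminus (psi (b + a' + s)) (psi (b + a'))) <= e2) ->
  (forall b, Rmin (-1) a <= b <= Rmax (-1) a -> Cmod (psi (b + a')) <= Mp) ->
  Cmod (Cminus (SN ep (Psi psi a0) (S M) (a, a')) (Psi psi a0 (a + a')))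
    <= Rabs (a + 1) * (e1 + e2 + ep (S M) * Mp).
Proof.
  intros Hc Ha0 HM Hep Hdel He1 He2 Ha' Hin H1 H2 HMp.
  set (N := S M) in *. set (eps := ep N) in *. set (c := 2 * (1 - eps) / INR N) in *.
  assert (HN : (1 <= N)%nat) by (unfold N; lia).
  assert (HNp := INR_pos N HN).
  assert (Hc0 : 0 <= c). { unfold c, Rdiv. apply Rmult_le_pos. lra. apply Rlt_le, Rinv_0_lt_compat; lra. }
  set (g := fun nu => Psi psi a0 (a' + hN ep N nu)).
  set (dg := fun k => @minus C_AbelianGroup (g k) (g (S k))).
  set (F := fun b => @minus C_AbelianGroup (B N g b) (Psi psi a0 (b + a'))).
  set (F' := fun b => @minus C_AbelianGroup (scal (INR N / 2) (B M dg b)) (psi (b + a'))).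
  assert (HSN : SN ep (Psi psi a0) N (a, a') = B N g a).
  { unfold SN. cbn [fst snd]. exact (B_SN N g a). }
  assert (HF1 : F (-1) = zero).
  { unfold F. rewrite B_m1. unfold g. rewrite hN_N by exact HN.
    replace (a' + -1) with (-1 + a') by ring. apply minus_eq_zero. }
  assert (Hlin : forall x, is_derive (fun b : R => b + a') x 1).
  { intros x. auto_derive; auto; ring. }
  assert (HFTC : @is_RInt C_R_NormedModule F' (-1) a (minus (F a) (F (-1)))).
  { apply (@is_RInt_derive C_R_CompleteNormedModule).
    - intros x Hx. unfold F, F'. apply @is_derive_minus.
      + exact (B_deriv M g x).
      + eapply deriv_eq.
        * apply (@is_derive_comp R_AbsRing C_R_NormedModule (Psi psi a0) (fun b => b + a')).
          -- apply (Psi_deriv lo hi); auto.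
             specialize (Hin x 0 Hx (conj (Rle_refl 0) Hc0)). rewrite Rplus_0_r in Hin. exact Hin.
          -- apply Hlin.
        * generalize (psi (x + a')). intros. cpair; ring.
    - intros x Hx. unfold F'. apply @continuous_minus.
      + apply @continuous_scal_r. apply B_cont.
      + apply (@continuous_comp R_UniformSpace R_UniformSpace C_R_NormedModule (fun b => b + a') psi).
        * apply (ex_derive_continuous (V:=R_NormedModule)). eexists; apply Hlin.
        * apply Hc. specialize (Hin x 0 Hx (conj (Rle_refl 0) Hc0)). rewrite Rplus_0_r in Hin. exact Hin. }
  assert (Hdg : forall mu, (mu <= M)%nat ->
     @is_RInt C_R_NormedModule (fun s => psi (a' + s + hN del M mu)) 0 c (dg mu)).
  { intros mu Hmu.
    assert (Hst := hN_step ep N mu HN). fold eps in Hst. fold c in Hst.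
    assert (Hsh := hN_shift ep del M mu HM Hdel). fold N in Hsh.
    set (y := a' + hN ep N (S mu)).
    assert (Hy : inI lo hi y).
    { apply Ha'. apply hN_range; auto. fold eps; lra. unfold N; lia. }
    assert (Hyc : inI lo hi (y + c)).
    { unfold y. rewrite Rplus_assoc, <- Hst. apply Ha'. apply hN_range; auto. fold eps; lra. unfold N; lia. }
    assert (Hv : dg mu = @RInt C_R_CompleteNormedModule psi y (y + c)).
    { unfold dg, g. rewrite <- (Psi_diff lo hi psi a0 y (y + c)); auto.
      unfold y. rewrite Rplus_assoc, <- Hst. reflexivity. }
    rewrite Hv.
    assert (Hex := @RInt_correct C_R_CompleteNormedModule psi y (y + c) (exRI lo hi psi y (y + c) Hc Hy Hyc)).
    assert (Hcl := @is_RInt_comp_lin C_R_NormedModule psi 1 y 0 c (@RInt C_R_CompleteNormedModule psi y (y + c))).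
    replace (1 * 0 + y) with y in Hcl by ring. replace (1 * c + y) with (y + c) in Hcl by ring.
    specialize (Hcl Hex).
    eapply is_RInt_ext; [| exact Hcl].
    intros s _. rewrite <- Hsh. unfold y. replace (1 * s + (a' + hN ep N (S mu))) with (a' + s + hN ep N (S mu)) by ring.
    generalize (psi (a' + s + hN ep N (S mu))). intros. cpair; ring. }
  assert (HI : forall x, @is_RInt C_R_NormedModule (fun s => B M (fun mu => psi (a' + s + hN del M mu)) x) 0 c (B M dg x)).
  { intros x. apply B_RInt. exact Hdg. }
  assert (HS : forall x s, B M (fun mu => psi (a' + s + hN del M mu)) x = SN del psi M (x, a' + s)).
  { intros x s. unfold SN; cbn [fst snd]. symmetry. exact (B_SN M (fun mu => psi (a' + s + hN del M mu)) x). }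
  assert (Hcoef : INR N / 2 * c = 1 - eps) by (unfold c; field; lra).
  assert (HB : forall x, Rmin (-1) a <= x <= Rmax (-1) a -> nR (F' x) <= e1 + e2 + eps * Mp).
  { intros x Hx.
    set (z := x + a').
    assert (HJ : @is_RInt C_R_NormedModule (fun s => @minus C_AbelianGroup (SN del psi M (x, a' + s)) (psi z)) 0 c
               (minus (B M dg x) (scal (c - 0) (psi z)))).
    { apply @is_RInt_minus.
      - eapply is_RInt_ext; [| exact (HI x)]. intros s _. apply HS.
      - apply @is_RInt_const. }
    assert (Hn : nR (minus (B M dg x) (scal (c - 0) (psi z))) <= (c - 0) * (e1 + e2)).
    { refine (norm_RInt_le_const _ 0 c _ _ Hc0 _ HJ).
      intros s Hs.
      assert (Hs' : 0 <= s <= c) by lra.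
      specialize (H1 x s Hx Hs'). specialize (H2 x s Hx Hs'). rewrite Cmod_normR in H1, H2.
      replace (x + a' + s) with (x + (a' + s)) in H2 by ring.
      assert (E : @minus C_AbelianGroup (SN del psi M (x, a' + s)) (psi z) =
         plus (minus (SN del psi M (x, a' + s)) (psi (x + (a' + s)))) (minus (psi (x + (a' + s))) (psi z))).
      { generalize (SN del psi M (x, a' + s)) (psi (x + (a' + s))) (psi z). intros. cpair; ring. }
      rewrite E. eapply Rle_trans; [apply (@norm_triangle R_AbsRing C_R_NormedModule)|]. unfold z. 
      change (@norm R_AbsRing C_R_NormedModule (Cminus (SN del psi M (x, a' + s)) (psi (x + (a' + s))))
        + @norm R_AbsRing C_R_NormedModule (Cminus (psi (x + (a' + s))) (psi (x + a'))) <= e1 + e2).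
      lra. }
    assert (E : F' x = plus (scal (INR N / 2) (minus (B M dg x) (scal (c - 0) (psi z))))
                            (scal (INR N / 2 * c - 1) (psi z))).
    { unfold F'. fold z. generalize (B M dg x) (psi z). intros. cpair; field. }
    rewrite E. eapply Rle_trans; [apply (@norm_triangle R_AbsRing C_R_NormedModule)|].
    eapply Rle_trans; [apply Rplus_le_compat; apply (@norm_scal R_AbsRing C_R_NormedModule)|].
    rewrite Hcoef. replace (1 - eps - 1) with (- eps) by ring.
    change (@abs R_AbsRing (INR N / 2)) with (Rabs (INR N / 2)). change (@abs R_AbsRing (- eps)) with (Rabs (- eps)).
    rewrite Rabs_Ropp, (Rabs_right eps) by lra.
    rewrite (Rabs_right (INR N / 2)) by (apply Rle_ge; unfold Rdiv; apply Rmult_le_pos; lra).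
    assert (Hz : nR (psi z) <= Mp) by (rewrite <- Cmod_normR; apply HMp; exact Hx).
    assert (Hn2 : INR N / 2 * nR (minus (B M dg x) (scal (c - 0) (psi z))) <= INR N / 2 * ((c - 0) * (e1 + e2))).
    { apply Rmult_le_compat_l; [unfold Rdiv; apply Rmult_le_pos; lra | exact Hn]. }
    replace (INR N / 2 * ((c - 0) * (e1 + e2))) with ((1 - eps) * (e1 + e2)) in Hn2
      by (rewrite <- Hcoef; ring).
    assert (eps * nR (psi z) <= eps * Mp) by (apply Rmult_le_compat_l; lra).
    nra. }
  assert (Hfin := norm_RInt_le_const_abs F' (-1) a _ _ HB HFTC).
  rewrite Cmod_normR.
  replace (Cminus (SN ep (Psi psi a0) N (a, a')) (Psi psi a0 (a + a'))) with (minus (F a) (F (-1))).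
  - replace (a + 1) with (a - -1) by ring. exact Hfin.
  - rewrite HF1, HSN. unfold F. generalize (B N g a) (Psi psi a0 (a + a')). intros. cpair; ring.
Qed.

Lemma arch (r : R) : exists n : nat, r < INR n.
Proof.
  destruct (archimed r) as [H _]. destruct (Z_lt_le_dec (up r) 0) as [Hl|Hl].
  - exists 0%nat. simpl. apply Rlt_trans with (IZR (up r)); [lra|]. apply IZR_lt in Hl. exact Hl.
  - exists (Z.to_nat (up r)). rewrite INR_IZR_INZ, Z2Nat.id by lia. lra.
Qed.

Lemma in_le_max (l : list nat) i : In i l -> (i <= fold_right max 0 l)%nat.
Proof. induction l; simpl; [tauto|]. intros [->|H]; [lia|]. specialize (IHl H). lia. Qed.

Lemma compact2_directed (K : R * R -> Prop) (V : nat -> R * R -> Prop) :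
  compact2 K ->
  (forall n, @open (prod_UniformSpace R_UniformSpace R_UniformSpace) (V n)) ->
  (forall n n' p, (n <= n')%nat -> V n p -> V n' p) ->
  (forall p, K p -> exists n, V n p) ->
  exists n, forall p, K p -> V n p.
Proof.
  intros HK HVo Hmon Hcov.
  destruct (HK nat V HVo Hcov) as [l Hl].
  exists (fold_right max 0%nat l). intros p Hp.
  destruct (Hl p Hp) as [i [Hi HVi]].
  eapply Hmon; [apply in_le_max; exact Hi | exact HVi].
Qed.

Lemma cont_lin (al be ga : R) (p : R * R) :
  @continuous (prod_UniformSpace R_UniformSpace R_UniformSpace) R_UniformSpace
    (fun q : R * R => al * fst q + be * snd q + ga) p.
Proof.
  destruct p as [x y].
  apply (@continuous_plus _ R_AbsRing R_NormedModule).
  apply (@continuous_plus _ R_AbsRing R_NormedModule).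
  - apply (@continuous_scal_r _ R_AbsRing R_NormedModule al fst). apply continuous_fst.
  - apply (@continuous_scal_r _ R_AbsRing R_NormedModule be snd). apply continuous_snd.
  - apply continuous_const.
Qed.

Lemma open_lin (D : R -> Prop) al be ga : open D ->
  @open (prod_UniformSpace R_UniformSpace R_UniformSpace) (fun q : R * R => D (al * fst q + be * snd q + ga)).
Proof.
  intros HD. apply (open_comp (fun q : R * R => al * fst q + be * snd q + ga) D); [|exact HD].
  intros x _. apply cont_lin.
Qed.

Lemma compact2_closed_sub (K1 G : R * R -> Prop) :
  compact2 K1 -> @open (prod_UniformSpace R_UniformSpace R_UniformSpace) G ->
  compact2 (fun q => K1 q /\ ~ G q).
Proof.
  intros HK HG I U HU Hcov.
  set (U' := fun (o : option I) q => match o with Some i => U i q | None => G q end).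
  assert (HU' : forall o, @open (prod_UniformSpace R_UniformSpace R_UniformSpace) (U' o)).
  { intros [i|]; unfold U'; [apply HU | exact HG]. }
  assert (Hcov' : forall q, K1 q -> exists o, U' o q).
  { intros q Hq. destruct (classic (G q)) as [Hg|Hg].
    - exists None. exact Hg.
    - destruct (Hcov q (conj Hq Hg)) as [i Hi]. exists (Some i). exact Hi. }
  destruct (HK _ U' HU' Hcov') as [l Hl].
  exists (flat_map (fun o => match o with Some i => i :: nil | None => nil end) l).
  intros q [Hq Hg]. destruct (Hl q Hq) as [[i|] [Hin Hu]].
  - exists i. split; [|exact Hu]. apply in_flat_map. exists (Some i). split; [exact Hin|]. simpl; auto.
  - contradiction.
Qed.

Lemma ball_R (x y e : R) : @ball R_UniformSpace x e y <-> Rabs (y - x) < e.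
Proof. unfold ball; simpl. unfold AbsRing_ball, abs, minus, plus, opp; simpl. tauto. Qed.

Lemma ball_RR (p q : R * R) e : @ball (prod_UniformSpace R_UniformSpace R_UniformSpace) p e q <->
  Rabs (fst q - fst p) < e /\ Rabs (snd q - snd p) < e.
Proof. unfold ball; simpl. unfold prod_ball. rewrite !ball_R. tauto. Qed.

Lemma grid_unclamped (R0 dd : R) (Kn : nat) : 0 < dd ->
  forall x, -R0 <= x <= -R0 + INR Kn * dd -> exists k, (k <= Kn)%nat /\ Rabs (x - (-R0 + INR k * dd)) < dd.
Proof.
  intros Hdd. induction Kn; intros x Hx.
  - exists 0%nat. split; [lia|]. simpl in *. rewrite Rabs_right; lra.
  - destruct (Rle_or_lt x (-R0 + INR Kn * dd)) as [Hl|Hl].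
    + destruct (IHKn x) as [k [Hk Hk']]; [lra|]. exists k. split; [lia|exact Hk'].
    + exists (S Kn). split; [lia|]. rewrite S_INR in *. rewrite Rabs_left1; nra.
Qed.

Lemma clamp_dist x y R0 : x <= R0 -> Rabs (x - Rmin y R0) <= Rabs (x - y).
Proof.
  intros Hx. unfold Rmin. destruct (Rle_dec y R0); [lra|].
  rewrite (Rabs_left1 (x - R0)) by lra. rewrite Rabs_left1; lra.
Qed.

Lemma compact2_box (R0 : R) : compact2 (fun q : R * R => (-R0 <= fst q <= R0) /\ (-R0 <= snd q <= R0)).
Proof.
  intros I U HU Hcov.
  destruct (Rlt_or_le R0 0) as [Hneg|Hpos].
  { exists nil. intros x [[? ?] _]; lra. }
  set (box := fun q : R * R => (-R0 <= fst q <= R0) /\ (-R0 <= snd q <= R0)).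
  assert (Hr : forall u v : R, exists dd : posreal, box (u, v) ->
     exists i, forall y, @ball (prod_UniformSpace R_UniformSpace R_UniformSpace) (u, v) (2 * dd) y -> U i y).
  { intros u v. destruct (classic (box (u, v))) as [Hb|Hb].
    - destruct (Hcov _ Hb) as [i Hi]. destruct (HU i _ Hi) as [eps Heps].
      assert (He2 : 0 < eps / 2) by (destruct eps; simpl; lra).
      exists (mkposreal _ He2). intros _. exists i. intros y Hy. apply Heps. simpl in Hy.
      replace (2 * (eps / 2)) with (pos eps) in Hy by field. exact Hy.
    - exists (mkposreal 1 Rlt_0_1). intros; contradiction. }
  set (delta := fun u v => proj1_sig (constructive_indefinite_description _ (Hr u v))).
  assert (Hdelta : forall u v, box (u, v) ->
     exists i, forall y, @ball (prod_UniformSpace R_UniformSpace R_UniformSpace) (u, v) (2 * delta u v) y -> U i y).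
  { intros u v. unfold delta. destruct (constructive_indefinite_description _ (Hr u v)) as [x Hx]. exact Hx. }
  destruct (compactness_value_2d (-R0) R0 (-R0) R0 delta) as [dd Hdd].
  assert (Hb0 : box (0, 0)) by (unfold box; simpl; lra).
  destruct (Hcov (0, 0) Hb0) as [i0 _].
  assert (Hsel : forall g : R * R, exists i, box g -> forall y,
     Rabs (fst y - fst g) < dd -> Rabs (snd y - snd g) < dd -> U i y).
  { intros [gx gy]. destruct (classic (box (gx, gy))) as [Hb|Hb]; [| exists i0; tauto].
    destruct Hb as [Hbx Hby]. simpl in Hbx, Hby.
    specialize (Hdd gx gy Hbx Hby).
    apply NNPP; intro Hno; apply Hdd; intros [u [v [Hu [Hv [H1 [H2 H3]]]]]]. apply Hno.
    destruct (Hdelta u v (conj Hu Hv)) as [i Hi]. exists i. intros _ y Hy1 Hy2. apply Hi.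
    apply ball_RR. simpl in *. split.
    - apply Rle_lt_trans with (Rabs (fst y - gx) + Rabs (gx - u)).
      + replace (fst y - u) with ((fst y - gx) + (gx - u)) by ring. apply Rabs_triang.
      + lra.
    - apply Rle_lt_trans with (Rabs (snd y - gy) + Rabs (gy - v)).
      + replace (snd y - v) with ((snd y - gy) + (gy - v)) by ring. apply Rabs_triang.
      + lra. }
  set (sel := fun g => proj1_sig (constructive_indefinite_description _ (Hsel g))).
  assert (Hsel' : forall g, box g -> forall y,
     Rabs (fst y - fst g) < dd -> Rabs (snd y - snd g) < dd -> U (sel g) y).
  { intros g. unfold sel. destruct (constructive_indefinite_description _ (Hsel g)) as [x Hx]. exact Hx. }
  destruct (arch (2 * R0 / dd)) as [Kn HKn].
  assert (HKn' : 2 * R0 < INR Kn * dd).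
  { destruct dd as [dd Hd]; simpl in *. apply (Rmult_lt_compat_r dd) in HKn; [|exact Hd].
    unfold Rdiv in HKn. rewrite Rmult_assoc, Rinv_l, Rmult_1_r in HKn; lra. }
  set (gx := fun k : nat => Rmin (-R0 + INR k * dd) R0).
  assert (Hgrid : forall x, -R0 <= x <= R0 -> exists k, (k <= Kn)%nat /\ Rabs (x - gx k) < dd /\ -R0 <= gx k <= R0).
  { intros x Hx. destruct (grid_unclamped R0 dd Kn (cond_pos dd) x) as [k [Hk Hk']]; [lra|].
    exists k. split; [exact Hk|]. split.
    - eapply Rle_lt_trans; [apply clamp_dist; lra | exact Hk'].
    - unfold gx. assert (0 <= INR k * dd) by (apply Rmult_le_pos; [apply pos_INR | apply Rlt_le, cond_pos]).
      unfold Rmin; destruct Rle_dec; lra. }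
  exists (flat_map (fun k => map (fun j => sel (gx k, gx j)) (seq 0 (S Kn))) (seq 0 (S Kn))).
  intros q [Hq1 Hq2].
  destruct (Hgrid _ Hq1) as [k [Hk [Hk1 Hk2]]].
  destruct (Hgrid _ Hq2) as [j [Hj [Hj1 Hj2]]].
  exists (sel (gx k, gx j)). split.
  - apply in_flat_map. exists k. split; [apply in_seq; lia|].
    apply (in_map (fun j0 => sel (gx k, gx j0))). apply in_seq; lia.
  - apply Hsel'; [split; simpl; auto | simpl; exact Hk1 | simpl; exact Hj1].
Qed.

Ltac ceq := repeat match goal with
  | z : C |- _ => let x := fresh "x" in let y := fresh "y" in destruct z as [x y]
  end; unfold Cminus, Cplus, Copp, Cmult; apply injective_projections; simpl; ring.

Lemma Cmod_sub3 (u v w : C) : Cmod (Cminus u w) <= Cmod (Cminus u v) + Cmod (Cminus v w).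
Proof.
  replace (Cminus u w) with (Cplus (Cminus u v) (Cminus v w)) by (generalize u v w; intros; ceq).
  apply Cmod_triangle.
Qed.

Lemma Cmod_rev (u v : C) : Rabs (Cmod u - Cmod v) <= Cmod (Cminus u v).
Proof.
  assert (H1 : Cmod u <= Cmod (Cminus u v) + Cmod v).
  { replace u with (Cplus (Cminus u v) v) at 1 by (generalize u v; intros; ceq). apply Cmod_triangle. }
  assert (H2 : Cmod v <= Cmod (Cminus u v) + Cmod u).
  { replace v with (Cplus (Copp (Cminus u v)) u) at 1 by (generalize u v; intros; ceq).
    eapply Rle_trans; [apply Cmod_triangle|]. rewrite Cmod_opp. lra. }
  unfold Rabs; destruct Rcase_abs; lra.
Qed.

Lemma cont_eps (psi : R -> C) t : @continuous R_UniformSpace C_R_NormedModule psi t ->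
  forall e, 0 < e -> exists r, 0 < r /\ forall x, Rabs (x - t) < r -> Cmod (Cminus (psi x) (psi t)) < e.
Proof.
  intros Hc e He.
  assert (Hnf := @norm_factor_gt_0 R_AbsRing C_R_NormedModule).
  assert (He' : 0 < e / @norm_factor R_AbsRing C_R_NormedModule) by (apply Rdiv_lt_0_compat; auto).
  destruct (proj1 (filterlim_locally psi (psi t)) Hc (mkposreal _ He')) as [r Hr].
  exists r. split; [apply cond_pos|]. intros x Hx.
  assert (Hb := Hr x (proj2 (ball_R t x r) Hx)).
  assert (Hn := @norm_compat2 R_AbsRing C_R_NormedModule (psi t) (psi x) (mkposreal _ He') Hb).
  simpl in Hn. rewrite Cmod_normR. replace e with (@norm_factor R_AbsRing C_R_NormedModule * (e / @norm_factor R_AbsRing C_R_NormedModule)) by (field; lra).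
  exact Hn.
Qed.

Lemma unif_cont (psi : R -> C) z1 z2 :
  (forall x, z1 <= x <= z2 -> @continuous R_UniformSpace C_R_NormedModule psi x) ->
  forall e, 0 < e -> exists d, 0 < d /\ forall x y, z1 <= x <= z2 -> Rabs (y - x) < d ->
     Cmod (Cminus (psi y) (psi x)) < e.
Proof.
  intros Hc e He.
  assert (Hr : forall t, exists rr : posreal, z1 <= t <= z2 ->
     forall x, Rabs (x - t) < 2 * rr -> Cmod (Cminus (psi x) (psi t)) < e / 2).
  { intros t. destruct (classic (z1 <= t <= z2)) as [Ht|Ht].
    - destruct (cont_eps psi t (Hc t Ht) (e / 2)) as [r [Hr0 Hr]]; [lra|].
      assert (Hr2 : 0 < r / 2) by lra. exists (mkposreal _ Hr2). intros _ x Hx. apply Hr. simpl in Hx. lra.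
    - exists (mkposreal 1 Rlt_0_1). intros; contradiction. }
  set (delta := fun t => proj1_sig (constructive_indefinite_description _ (Hr t))).
  assert (Hdelta : forall t, z1 <= t <= z2 ->
     forall x, Rabs (x - t) < 2 * delta t -> Cmod (Cminus (psi x) (psi t)) < e / 2).
  { intros t. unfold delta. destruct (constructive_indefinite_description _ (Hr t)) as [x Hx]. exact Hx. }
  destruct (compactness_value_1d z1 z2 delta) as [d Hd].
  exists d. split; [apply cond_pos|]. intros x y Hx Hxy.
  apply NNPP; intro Hno; apply (Hd x Hx); intros [t [Ht [H1 H2]]]. apply Hno.
  assert (Hp := cond_pos (delta t)).
  assert (A1 : Cmod (Cminus (psi x) (psi t)) < e / 2) by (apply Hdelta; auto; lra).
  assert (A2 : Cmod (Cminus (psi y) (psi t)) < e / 2).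
  { apply Hdelta; auto.
    apply Rle_lt_trans with (Rabs (y - x) + Rabs (x - t)).
    - replace (y - t) with ((y - x) + (x - t)) by ring. apply Rabs_triang.
    - lra. }
  eapply Rle_lt_trans; [apply (Cmod_sub3 _ (psi t))|].
  replace (Cminus (psi t) (psi x)) with (Copp (Cminus (psi x) (psi t))) by (generalize (psi t) (psi x); intros; ceq).
  rewrite Cmod_opp. lra.
Qed.

Lemma psi_bound (psi : R -> C) z1 z2 : z1 <= z2 ->
  (forall x, z1 <= x <= z2 -> @continuous R_UniformSpace C_R_NormedModule psi x) ->
  exists Mp, forall x, z1 <= x <= z2 -> Cmod (psi x) <= Mp.
Proof.
  intros Hz Hc.
  destruct (continuity_ab_maj (fun x => Cmod (psi x)) z1 z2 Hz) as [Mx [HM _]].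
  - intros c Hcz. apply continuity_pt_filterlim. apply filterlim_locally. intros eps.
    destruct (cont_eps psi c (Hc c Hcz) eps (cond_pos eps)) as [r [Hr0 Hr]].
    exists (mkposreal r Hr0). intros x Hx. apply ball_R. simpl.
    eapply Rle_lt_trans; [apply Cmod_rev|]. apply Hr. apply ball_R in Hx. exact Hx.
  - exists (Cmod (psi Mx)). exact HM.
Qed.

Lemma inI_between lo hi x y z : inI lo hi x -> inI lo hi y -> x <= z <= y -> inI lo hi z.
Proof.
  intros Hx Hy Hz. apply (inI_conv lo hi x y z Hx Hy).
  unfold Rmin, Rmax; destruct Rle_dec; lra.
Qed.

Lemma open_lin' (D : R -> Prop) (f : R * R -> R) al be ga :
  (forall q, f q = al * fst q + be * snd q + ga) -> open D ->
  @open (prod_UniformSpace R_UniformSpace R_UniformSpace) (fun q => D (f q)).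
Proof.
  intros Hf HD. eapply open_ext; [| apply (open_lin D al be ga HD)].
  intros q. rewrite Hf. tauto.
Qed.

Definition Vn (lo hi : Rbar) (n : nat) (p : R * R) : Prop :=
  (- INR n < fst p < INR n) /\ (- INR n < snd p < INR n) /\
  inI lo hi (snd p - 1 - / (INR n + 1)) /\ inI lo hi (snd p + 1 + / (INR n + 1)) /\
  inI lo hi (fst p + snd p - / (INR n + 1)) /\ inI lo hi (fst p + snd p + / (INR n + 1)).

Lemma inI_locally lo hi x : inI lo hi x -> exists eps, 0 < eps /\ forall y, Rabs (y - x) < eps -> inI lo hi y.
Proof.
  intros Hx. destruct (inI_open lo hi x Hx) as [eps Heps].
  exists eps. split; [apply cond_pos|]. intros y Hy. apply Heps. apply ball_R. exact Hy.
Qed.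

Lemma margin lo hi K : compact2 K -> (forall p, K p -> bbA lo hi p) ->
  exists n, forall p, K p -> Vn lo hi n p.
Proof.
  intros HK HKA. apply compact2_directed; auto.
  - intros n. unfold Vn.
    apply open_and; [apply open_and; [ eapply open_ext; [| apply (open_lin' (fun u => - INR n < u) fst 1 0 0); [intros; ring | apply open_gt]]; intros q; apply iff_refl | eapply open_ext; [| apply (open_lin' (fun u => u < INR n) fst 1 0 0); [intros; ring | apply open_lt]]; intros q; apply iff_refl ] |].
    apply open_and; [apply open_and; [ eapply open_ext; [| apply (open_lin' (fun u => - INR n < u) snd 0 1 0); [intros; ring | apply open_gt]]; intros q; apply iff_refl | eapply open_ext; [| apply (open_lin' (fun u => u < INR n) snd 0 1 0); [intros; ring | apply open_lt]]; intros q; apply iff_refl ] |].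
    apply open_and; [ eapply open_ext; [| apply (open_lin' (inI lo hi) (fun q => snd q - 1 - / (INR n + 1)) 0 1 (- 1 - / (INR n + 1))); [intros; ring | apply inI_open]]; intros q; apply iff_refl |].
    apply open_and; [ eapply open_ext; [| apply (open_lin' (inI lo hi) (fun q => snd q + 1 + / (INR n + 1)) 0 1 (1 + / (INR n + 1))); [intros; ring | apply inI_open]]; intros q; apply iff_refl |].
    apply open_and; [ eapply open_ext; [| apply (open_lin' (inI lo hi) (fun q => fst q + snd q - / (INR n + 1)) 1 1 (- / (INR n + 1))); [intros; ring | apply inI_open]]; intros q; apply iff_refl | eapply open_ext; [| apply (open_lin' (inI lo hi) (fun q => fst q + snd q + / (INR n + 1)) 1 1 (/ (INR n + 1))); [intros; ring | apply inI_open]]; intros q; apply iff_refl ].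
  - intros n n' p Hnn' [H1 [H2 [H3 [H4 [H5 H6]]]]].
    assert (Hle : INR n <= INR n') by (apply le_INR; exact Hnn').
    assert (Hn0 : 0 <= INR n) by apply pos_INR.
    assert (Hr : / (INR n' + 1) <= / (INR n + 1)) by (apply Rinv_le_contravar; lra).
    assert (Hr0 : 0 < / (INR n' + 1)) by (apply Rinv_0_lt_compat; lra).
    unfold Vn. split; [lra|]. split; [lra|].
    split; [apply (inI_between lo hi _ _ _ H3 H4); lra|].
    split; [apply (inI_between lo hi _ _ _ H3 H4); lra|].
    split; [apply (inI_between lo hi _ _ _ H5 H6); lra|].
    apply (inI_between lo hi _ _ _ H5 H6); lra.
  - intros p Hp. destruct (HKA p Hp) as [Ht Hs].
    assert (Hm1 := Ht (-1) ltac:(lra)). assert (Hp1 := Ht 1 ltac:(lra)).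
    destruct (inI_locally _ _ _ Hm1) as [e1 [He1 Hr1]].
    destruct (inI_locally _ _ _ Hp1) as [e2 [He2 Hr2]].
    destruct (inI_locally _ _ _ Hs) as [e3 [He3 Hr3]].
    set (em := Rmin e1 (Rmin e2 e3)).
    assert (Hem : 0 < em) by (unfold em, Rmin; repeat destruct Rle_dec; lra).
    assert (Hem1 : em <= e1 /\ em <= e2 /\ em <= e3) by (unfold em, Rmin; repeat destruct Rle_dec; lra).
    destruct (arch (Rmax (Rabs (fst p)) (Rmax (Rabs (snd p)) (/ em)))) as [n Hn].
    exists n.
    assert (Hmx1 := Rmax_l (Rabs (fst p)) (Rmax (Rabs (snd p)) (/ em))).
    assert (Hmx2 := Rmax_r (Rabs (fst p)) (Rmax (Rabs (snd p)) (/ em))).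
    assert (Hmx3 := Rmax_l (Rabs (snd p)) (/ em)).
    assert (Hmx4 := Rmax_r (Rabs (snd p)) (/ em)).
    assert (Hn0 : 0 <= INR n) by apply pos_INR.
    assert (Hr0 : 0 < / (INR n + 1)) by (apply Rinv_0_lt_compat; lra).
    assert (Hrem : / (INR n + 1) < em).
    { rewrite <- (Rinv_inv em). apply Rinv_lt_contravar.
      - apply Rmult_lt_0_compat; [apply Rinv_0_lt_compat; lra | lra].
      - lra. }
    assert (Hf : - INR n < fst p < INR n).
    { assert (Hq : Rabs (fst p) < INR n) by lra. apply Rabs_def2 in Hq. lra. }
    assert (Hs' : - INR n < snd p < INR n).
    { assert (Hq : Rabs (snd p) < INR n) by lra. apply Rabs_def2 in Hq. lra. }
    unfold Vn. split; [exact Hf|]. split; [exact Hs'|].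
    split; [apply Hr1; rewrite Rabs_left1; lra|].
    split; [apply Hr2; rewrite Rabs_right; lra|].
    split; [apply Hr3; rewrite Rabs_left1; lra|].
    apply Hr3; rewrite Rabs_right; lra.
Qed.

Lemma lo_bound lo hi K n p0 : K p0 -> (forall p, K p -> Vn lo hi n p) ->
  exists lo', (forall x, lo' <= x -> Rbar_lt lo x) /\
    forall p, K p -> lo' <= snd p - 1 /\ lo' <= fst p + snd p.
Proof.
  intros Hp0 HV.
  assert (Hn0 : 0 <= INR n) by apply pos_INR.
  assert (Hr0 : 0 < / (INR n + 1)) by (apply Rinv_0_lt_compat; lra).
  destruct lo as [l| |].
  - exists (l + / (INR n + 1) / 2). split.
    + intros x Hx. simpl. lra.
    + intros p Hp. destruct (HV p Hp) as [_ [_ [[H3 _] [_ [[H5 _] _]]]]]. simpl in H3, H5. lra.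
  - destruct (HV p0 Hp0) as [_ [_ [[H3 _] _]]]. simpl in H3. contradiction.
  - exists (- 2 * INR n - 2). split.
    + intros x Hx. simpl. exact I.
    + intros p Hp. destruct (HV p Hp) as [H1 [H2 _]]. lra.
Qed.

Lemma hi_bound lo hi K n p0 : K p0 -> (forall p, K p -> Vn lo hi n p) ->
  exists hi', (forall x, x <= hi' -> Rbar_lt x hi) /\
    forall p, K p -> snd p + 1 + / (INR n + 1) / 2 <= hi' /\ fst p + snd p + / (INR n + 1) / 2 <= hi'.
Proof.
  intros Hp0 HV.
  assert (Hn0 : 0 <= INR n) by apply pos_INR.
  assert (Hr0 : 0 < / (INR n + 1)) by (apply Rinv_0_lt_compat; lra).
  assert (Hr1 : / (INR n + 1) <= 1).
  { rewrite <- Rinv_1. apply Rinv_le_contravar; lra. }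
  destruct hi as [h| |].
  - exists (h - / (INR n + 1) / 2). split.
    + intros x Hx. simpl. lra.
    + intros p Hp. destruct (HV p Hp) as [_ [_ [_ [[_ H4] [_ [_ H6]]]]]]. simpl in H4, H6. lra.
  - exists (2 * INR n + 2). split.
    + intros x Hx. simpl. exact I.
    + intros p Hp. destruct (HV p Hp) as [H1 [H2 _]]. lra.
  - destruct (HV p0 Hp0) as [_ [_ [[_ H3] _]]]. simpl in H3. contradiction.
Qed.

Definition delS (ep : nat -> R) (M : nat) : R := ep (S M) + (1 - ep (S M)) / INR (S M).

Lemma inv_small eta : 0 < eta -> exists M, forall N, (M <= N)%nat -> / INR (S N) <= eta.
Proof.
  intros He. destruct (arch (/ eta)) as [M HM]. exists M. intros N HN.
  assert (HMN : INR M <= INR N) by (apply le_INR; exact HN).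
  rewrite S_INR. rewrite <- (Rinv_inv eta).
  apply Rlt_le, Rinv_lt_contravar.
  - apply Rmult_lt_0_compat; [apply Rinv_0_lt_compat; lra | assert (0 <= INR N) by apply pos_INR; lra].
  - lra.
Qed.

Lemma delS_bound ep M : 0 <= ep (S M) < 1 ->
  0 <= delS ep M <= ep (S M) + / INR (S M) /\ ((1 <= M)%nat -> delS ep M < 1).
Proof.
  intros He. unfold delS.
  assert (Hp : 0 < INR (S M)) by (apply lt_0_INR; lia).
  assert (Hq : 0 <= (1 - ep (S M)) / INR (S M)) by (apply Rdiv_le_0_compat; lra).
  assert (Hq2 : (1 - ep (S M)) / INR (S M) <= / INR (S M)).
  { unfold Rdiv. rewrite <- (Rmult_1_l (/ INR (S M))) at 2. apply Rmult_le_compat_r; [apply Rlt_le, Rinv_0_lt_compat; lra | lra]. }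
  split; [lra|].
  intros HM. rewrite S_INR in *. assert (H1 : 1 <= INR M) by (apply (le_INR 1); exact HM).
  assert ((1 - ep (S M)) / (INR M + 1) < 1 - ep (S M)).
  { apply (Rmult_lt_reg_r (INR M + 1)); [lra|]. unfold Rdiv. rewrite Rmult_assoc, Rinv_l by lra. nra. }
  lra.
Qed.

Lemma delS_adm ep : adm_seq ep -> adm_seq (delS ep).
Proof.
  intros [H0 Hl]. split.
  - intros N HN. destruct (delS_bound ep N (H0 (S N) ltac:(lia))) as [[A B] C]. split; [exact A | apply C; exact HN].
  - apply is_lim_seq_le_le with (u := fun _ => 0) (w := fun M => ep (S M) + / INR (S M)).
    + intros M. destruct (delS_bound ep M (H0 (S M) ltac:(lia))) as [A _]. exact A.
    + apply is_lim_seq_const.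
    + replace (Finite 0) with (Finite (0 + 0)) by (f_equal; ring).
      apply is_lim_seq_plus'.
      * apply (is_lim_seq_incr_1 ep). exact Hl.
      * apply is_lim_seq_spec. intros eps. destruct (inv_small (eps / 2)) as [M HM].
        { assert (Hp := cond_pos eps). lra. }
        exists M. intros N HN. rewrite Rminus_0_r. specialize (HM N HN).
        assert (Hp := cond_pos eps).
        assert (0 < / INR (S N)) by (apply Rinv_0_lt_compat, lt_0_INR; lia).
        rewrite Rabs_right; lra.
Qed.

Lemma delS_unif (I' : Type) (eps : I' -> nat -> R) :
  (forall i, adm_seq (eps i)) ->
  (forall eta, 0 < eta -> exists M : nat, forall N, (M <= N)%nat -> forall i, eps i N <= eta) ->
  (forall eta, 0 < eta -> exists M : nat, forall N, (M <= N)%nat -> forall i, delS (eps i) N <= eta).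
Proof.
  intros Hadm Hu eta He.
  destruct (Hu (eta / 2) ltac:(lra)) as [M1 HM1].
  destruct (inv_small (eta / 2) ltac:(lra)) as [M2 HM2].
  exists (max M1 M2). intros N HN i.
  destruct (Hadm i) as [H0 _].
  destruct (delS_bound (eps i) N (H0 (S N) ltac:(lia))) as [[A B] _].
  specialize (HM1 (S N) ltac:(lia) i). specialize (HM2 N ltac:(lia)). lra.
Qed.

Definition clause2 (lo hi : Rbar) (f : R -> C) : Prop :=
  forall (I' : Type) (eps : I' -> nat -> R),
     (forall i, adm_seq (eps i)) ->
     (forall eta, 0 < eta -> exists M : nat, forall N, (M <= N)%nat ->
        forall i, eps i N <= eta) ->
     forall K, (forall p, K p -> bbA lo hi p) -> compact2 K ->
     forall e, 0 < e -> exists N0 : nat, forall N, (N0 <= N)%nat ->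
       forall i p, K p -> Cmod (Cminus (SN (eps i) f N p) (f (fst p + snd p))) < e.

Lemma main2 lo hi (psi : R -> C) a0 :
  (forall x, inI lo hi x -> @continuous R_UniformSpace C_R_NormedModule psi x) ->
  inI lo hi a0 -> clause2 lo hi psi -> clause2 lo hi (Psi psi a0).
Proof.
  intros Hc Ha0 H2 I' eps Hadm Hu K HKA HK e He.
  destruct (classic (exists p, K p)) as [[p0 Hp0]|Hne].
  2: { exists 0%nat. intros N _ i p Hp. exfalso; apply Hne; eauto. }
  destruct (margin lo hi K HK HKA) as [n HV].
  destruct (lo_bound lo hi K n p0 Hp0 HV) as [lo' [Hlo1 Hlo2]].
  destruct (hi_bound lo hi K n p0 Hp0 HV) as [hi' [Hhi1 Hhi2]].
  set (m := / (INR n + 1)) in *. set (L := INR n) in *.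
  assert (HL : 0 <= L) by apply pos_INR.
  assert (Hm0 : 0 < m) by (apply Rinv_0_lt_compat; lra).
  assert (Hm1 : m <= 1) by (unfold m; rewrite <- Rinv_1; apply Rinv_le_contravar; lra).
  assert (Hz : forall x, lo' <= x <= hi' -> inI lo hi x) by (intros x Hx; split; [apply Hlo1 | apply Hhi1]; lra).
  assert (Hloh : lo' <= hi') by (destruct (Hlo2 p0 Hp0); destruct (Hhi2 p0 Hp0); lra).
  assert (Hcz : forall x, lo' <= x <= hi' -> @continuous R_UniformSpace C_R_NormedModule psi x) by (intros; apply Hc, Hz; auto).
  destruct (psi_bound psi lo' hi' Hloh Hcz) as [Mp HMp].
  assert (HMp0 : 0 <= Mp) by (eapply Rle_trans; [apply Cmod_ge_0 | apply (HMp lo'); lra]).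
  set (W := L + 2).
  assert (HW : 0 < W) by (unfold W; lra).
  set (e1 := e / (4 * W)).
  assert (He1 : 0 < e1) by (unfold e1; apply Rdiv_lt_0_compat; lra).
  destruct (unif_cont psi lo' hi' Hcz e1 He1) as [d [Hd Hud]].
  set (K2 := fun q : R * R => ((- (L + 2) <= fst q <= L + 2) /\ (- (L + 2) <= snd q <= L + 2)) /\
     ~ (snd q - 1 < lo' \/ hi' < snd q + 1 \/ fst q + snd q < lo' \/ hi' < fst q + snd q)).
  assert (HK2c : compact2 K2).
  { apply compact2_closed_sub. apply compact2_box.
    apply open_or; [|apply open_or; [|apply open_or]].
    - eapply open_ext; [| apply (open_lin' (fun u => u < lo') (fun q => snd q - 1) 0 1 (-1)); [intros; ring | apply open_lt]]; intros q; apply iff_refl.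
    - eapply open_ext; [| apply (open_lin' (fun u => hi' < u) (fun q => snd q + 1) 0 1 1); [intros; ring | apply open_gt]]; intros q; apply iff_refl.
    - eapply open_ext; [| apply (open_lin' (fun u => u < lo') (fun q => fst q + snd q) 1 1 0); [intros; ring | apply open_lt]]; intros q; apply iff_refl.
    - eapply open_ext; [| apply (open_lin' (fun u => hi' < u) (fun q => fst q + snd q) 1 1 0); [intros; ring | apply open_gt]]; intros q; apply iff_refl. }
  assert (HK2A : forall q, K2 q -> bbA lo hi q).
  { intros q [_ Hq]. split.
    - intros t Ht. apply Hz. split; apply Rnot_lt_le; intro; apply Hq; [left | right; left]; lra.
    - apply Hz. split; apply Rnot_lt_le; intro; apply Hq; right; right; [left | right]; lra. }
  destruct (H2 I' (fun i => delS (eps i)) (fun i => delS_adm _ (Hadm i)) (delS_unif I' eps Hadm Hu)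
     K2 HK2A HK2c e1 He1) as [N1 HN1].
  set (eta := e / (4 * W * (Mp + 1))).
  assert (Heta : 0 < eta) by (unfold eta; apply Rdiv_lt_0_compat; [lra | apply Rmult_lt_0_compat; lra]).
  destruct (Hu eta Heta) as [Me HMe].
  destruct (arch (2 / d)) as [Nd HNd].
  destruct (arch (4 / m)) as [Nm HNm].
  exists (max (S N1) (max 2 (max Nd (max Nm Me)))).
  intros N HN i p Hp.
  destruct N as [|M]; [lia|].
  assert (HM1 : (1 <= M)%nat) by lia.
  assert (HMN1 : (N1 <= M)%nat) by lia.
  destruct (Hadm i) as [Hadm0 _].
  assert (Hep : 0 <= eps i (S M) < 1) by (apply Hadm0; lia).
  assert (Hepeta : eps i (S M) <= eta) by (apply HMe; lia).
  set (X := INR (S M)).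
  assert (HX : 0 < X) by (apply lt_0_INR; lia).
  assert (HXd : 2 / d < X) by (apply Rlt_le_trans with (INR Nd); [exact HNd | apply le_INR; lia]).
  assert (HXm : 4 / m < X) by (apply Rlt_le_trans with (INR Nm); [exact HNm | apply le_INR; lia]).
  assert (Hc1 : 2 * (1 - eps i (S M)) / X <= 2 / X).
  { unfold Rdiv. apply Rmult_le_compat_r; [apply Rlt_le, Rinv_0_lt_compat; lra | lra]. }
  assert (Hc2 : 2 / X < d).
  { apply (Rmult_lt_reg_r X); [lra|]. unfold Rdiv. rewrite Rmult_assoc, Rinv_l, Rmult_1_r by lra.
    apply (Rmult_lt_compat_l d) in HXd; [|lra]. unfold Rdiv in HXd.
    rewrite (Rmult_comm 2), <- Rmult_assoc, Rinv_r, Rmult_1_l in HXd by lra. lra. }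
  assert (Hc3 : 2 / X < m / 2).
  { apply (Rmult_lt_reg_r X); [lra|]. unfold Rdiv. rewrite Rmult_assoc, Rinv_l, Rmult_1_r by lra.
    apply (Rmult_lt_compat_l m) in HXm; [|lra]. unfold Rdiv in HXm.
    rewrite (Rmult_comm 4), <- Rmult_assoc, Rinv_r, Rmult_1_l in HXm by lra. lra. }
  destruct p as [a a']. simpl.
  destruct (HKA (a, a') Hp) as [Ha' _]. simpl in Ha'.
  destruct (Hlo2 (a, a') Hp) as [Hl1 Hl2]. destruct (Hhi2 (a, a') Hp) as [Hh1 Hh2].
  destruct (HV (a, a') Hp) as [[Ha1 Ha2] [[Hb1 Hb2] _]].
  cbn [fst snd] in Ha', Hl1, Hl2, Hh1, Hh2, Ha1, Ha2, Hb1, Hb2. fold L in Ha1, Ha2, Hb1, Hb2.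
  assert (Hbd : forall b, Rmin (-1) a <= b <= Rmax (-1) a ->
     lo' <= b + a' /\ b + a' + m / 2 <= hi' /\ - (L + 1) <= b <= L + 1).
  { intros b Hb. unfold Rmin, Rmax in Hb. destruct (Rle_dec (-1) a); lra. }
  assert (Hcore := core lo hi psi a0 M (eps i) (delS (eps i)) a a' e1 e1 Mp Hc Ha0 HM1 Hep
     ltac:(reflexivity) (Rlt_le _ _ He1) (Rlt_le _ _ He1) Ha').
  fold X in Hcore.
  assert (Hfin : Cmod (Cminus (SN (eps i) (Psi psi a0) (S M) (a, a')) (Psi psi a0 (a + a')))
     <= Rabs (a + 1) * (e1 + e1 + eps i (S M) * Mp)).
  { apply Hcore.
    - intros b s Hb Hs. destruct (Hbd b Hb) as [B1 [B2 B3]]. apply Hz. lra.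
    - intros b s Hb Hs. destruct (Hbd b Hb) as [B1 [B2 B3]].
      apply Rlt_le. apply (HN1 M HMN1 i (b, a' + s)).
      split; [split; simpl; lra|]. simpl. intros HG; lra.
    - intros b s Hb Hs. destruct (Hbd b Hb) as [B1 [B2 B3]].
      apply Rlt_le. apply Hud; [lra|]. replace (b + a' + s - (b + a')) with s by ring.
      rewrite Rabs_right; lra.
    - intros b Hb. destruct (Hbd b Hb) as [B1 [B2 B3]]. apply HMp. lra. }
  eapply Rle_lt_trans; [exact Hfin|].
  assert (Ha1b : Rabs (a + 1) <= L + 1).
  { unfold Rabs; destruct Rcase_abs; lra. }
  assert (Hem : eta * Mp <= e1).
  { assert (eta * (Mp + 1) = e1) by (unfold eta, e1; field; lra). nra. }
  assert (HQ : 0 <= e1 + e1 + eps i (S M) * Mp) by nra.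
  assert (HQ2 : e1 + e1 + eps i (S M) * Mp <= 3 * e1) by nra.
  assert (H3 : (L + 1) * (3 * e1) < e).
  { unfold e1, W. apply (Rmult_lt_reg_r (4 * (L + 2))); [lra|].
    field_simplify; [nra | lra]. }
  apply Rle_lt_trans with ((L + 1) * (3 * e1)); [|exact H3].
  apply Rmult_le_compat; auto; apply Rabs_pos.
Qed.

Theorem mainTheorem8 (lo hi : Rbar) (psi : R -> C) (a0 : R) :
  long_interval lo hi ->
  regular_supershift lo hi psi ->
  inI lo hi a0 ->
  regular_supershift lo hi
    (fun a => @RInt C_R_CompleteNormedModule psi a0 a).
Proof.
  intros _ [Hc [_ H2]] Ha0.
  assert (Hc' : forall x, inI lo hi x -> @continuous R_UniformSpace C_R_NormedModule psi x) by exact Hc.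
  assert (H2' : clause2 lo hi psi) by exact H2.
  assert (HM := main2 lo hi psi a0 Hc' Ha0 H2').
  change (regular_supershift lo hi (Psi psi a0)).
  split; [|split].
  - intros x Hx.
    assert (Hd := Psi_deriv lo hi psi a0 x Hc' Ha0 Hx).
    exact (@ex_derive_continuous R_AbsRing C_R_NormedModule (Psi psi a0) x (ex_intro _ (psi x) Hd)).
  - intros eps Hadm K HKA HK e He.
    assert (Hunif : forall eta, 0 < eta -> exists M : nat, forall N, (M <= N)%nat -> forall i : unit, eps N <= eta).
    { intros eta Heta. destruct Hadm as [_ Hl]. apply is_lim_seq_spec in Hl.
      destruct (Hl (mkposreal eta Heta)) as [M HMl]. exists M. intros N HN _.
      specialize (HMl N HN). simpl in HMl. rewrite Rminus_0_r in HMl.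
      apply Rabs_def2 in HMl. lra. }
    destruct (HM unit (fun _ => eps) (fun _ => Hadm) Hunif K HKA HK e He) as [N0 HN0].
    exists N0. intros N HN p Hp. exact (HN0 N HN tt p Hp).
  - exact HM.
Qed.
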